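(* In the setting of the adaptive mirror triangle method for the minimax problem (see context), for every step $k\ge0$ performed by the method and every $x\in Q$, $$A_{k+1}f(x_{k+1})-A_kf(x_k)+V(x,u_{k+1})-V(x,u_k)\le\alpha_{k+1}f(x),$$ where $\alpha_{k+1},A_{k+1},u_{k+1},x_{k+1}$ are the values accepted at step $k+1$.
   Context: $\mathbb{R}^n$ carries a norm $\|\cdot\|$ with dual norm $\|\lambda\|_*=\max_{\|\nu\|\le1}\langle\lambda,\nu\rangle$; $Q\subseteq\mathbb{R}^n$ closed convex; $f_1,\dots,f_M$ convex on $Q$, differentiable, with $\|\nabla f_i(x)-\nabla f_i(y)\|_*\le L\|x-y\|$; $h$ convex on $Q$; $f(x)=\max_i f_i(x)+h(x)$. A prox-function is a continuously differentiable $d:Q\to\mathbb{R}$, $1$-strongly convex w.r.t. $\|\cdot\|$; $V(x,y)=d(x)-d(y)-\langle\nabla d(y),x-y\rangle$. Method (with $x_0\in Q$, $0<L_0\le L$): $y_0=u_0=x_0$, $L_1=L_0/2$, $\alpha_0=A_0=0$. Step $k+1$ with current $L_{k+1}$: (i) $\alpha_{k+1}$ is the largest root of $A_k+\alpha=L_{k+1}\alpha^2$, $A_{k+1}=A_k+\alpha_{k+1}$; (ii) $y_{k+1}=(\alpha_{k+1}u_k+A_kx_k)/A_{k+1}$; (iii) $u_{k+1}=\arg\min_{x\in Q}\{V(x,u_k)+\alpha_{k+1}(\max_j[f_j(y_{k+1})+\langle\nabla f_j(y_{k+1}),x-y_{k+1}\rangle]+h(x))\}$; (iv) $x_{k+1}=(\alpha_{k+1}u_{k+1}+A_kx_k)/A_{k+1}$;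 (v) if $f(x_{k+1})\le\max_j\{f_j(y_{k+1})+\langle\nabla f_j(y_{k+1}),x_{k+1}-y_{k+1}\rangle\}+\frac{L_{k+1}}{2}\|x_{k+1}-y_{k+1}\|^2+h(x_{k+1})$, set $L_{k+2}=L_{k+1}/2$ and go to the next step; otherwise replace $L_{k+1}$ by $2L_{k+1}$ and repeat step $k+1$ from (i). *)

(* Defs.v *)
From HB Require Import structures.
From mathcomp Require Import all_boot all_order all_algebra.
From mathcomp Require Import all_classical all_reals all_analysis.
Set Implicit Arguments. Unset Strict Implicit. Unset Printing Implicit Defensive.
Import Order.TTheory GRing.Theory Num.Theory.
Import numFieldNormedType.Exports.
Local Open Scope classical_set_scope.
Local Open Scope ring_scope.

Section Defs.
Variables (R : realType) (n : nat).
Notation vec := 'rV[R]_n.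

Definition dot (l v : vec) : R := \sum_(i < n) l ord0 i * v ord0 i.

Definition is_norm (nrm : vec -> R) : Prop :=
  [/\ forall x, 0 <= nrm x,
      forall x, nrm x = 0 -> x = 0,
      forall (a : R) x, nrm (a *: x) = `|a| * nrm x &
      forall x y, nrm (x + y) <= nrm x + nrm y].

Definition dual_norm (nrm : vec -> R) (l : vec) : R :=
  sup [set dot l v | v in [set v | nrm v <= 1]].

Definition convex_on (Q : set vec) (g : vec -> R) : Prop :=
  forall x y (t : R), Q x -> Q y -> 0 <= t <= 1 ->
    g (t *: x + (1 - t) *: y) <= t * g x + (1 - t) * g y.

Definition strongly_convex1_on (nrm : vec -> R) (Q : set vec) (g : vec -> R) : Prop :=
  forall x y (t : R), Q x -> Q y -> 0 <= t <= 1 ->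
    g (t *: x + (1 - t) *: y) <=
      t * g x + (1 - t) * g y - t * (1 - t) / 2 * nrm (x - y) ^+ 2.

Definition gradient_on (Q : set vec) (g : vec -> R) (gr : vec -> vec) : Prop :=
  forall x, Q x -> differentiable g x /\ forall v, 'd g x v = dot (gr x) v.

Definition bregman (d : vec -> R) (gd : vec -> vec) (x y : vec) : R :=
  d x - d y - dot (gd y) (x - y).

(* maximum over the M = m+1 indices *)
Definition bmax (m : nat) (F : 'I_m.+1 -> R) : R :=
  \big[Num.max/F ord0]_(i < m.+1) F i.

Definition fobj (m : nat) (fs : 'I_m.+1 -> vec -> R) (h : vec -> R) (x : vec) : R :=
  bmax (fun i => fs i x) + h x.

Definition linmax (m : nat) (fs : 'I_m.+1 -> vec -> R) (gs : 'I_m.+1 -> vec -> vec)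
  (y x : vec) : R :=
  bmax (fun j => fs j y + dot (gs j y) (x - y)).

(* A run of N steps (steps 1..N) of the adaptive mirror triangle method.
   Lk k.+1, alpha k.+1, A k.+1, y k.+1, u k.+1, x k.+1 are the values
   accepted at step k+1. *)
Definition amt_run (m : nat) (nrm : vec -> R) (Q : set vec)
  (fs : 'I_m.+1 -> vec -> R) (gs : 'I_m.+1 -> vec -> vec) (h : vec -> R)
  (d : vec -> R) (gd : vec -> vec) (x0 : vec) (L0 : R) (N : nat)
  (Lk alpha A : nat -> R) (x u y : nat -> vec) : Prop :=
  (Lk 0%N = L0 /\ alpha 0%N = 0 /\ A 0%N = 0 /\ x 0%N = x0 /\ u 0%N = x0 /\ y 0%N = x0) /\
   forall k : nat, (k < N)%N ->
   [/\ (* backtracking: L_{k+1} = (L_k / 2) * 2^i for some number i of doublings *)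
       (exists i : nat, Lk k.+1 = Lk k / 2 * 2 ^+ i) /\
       (A k + alpha k.+1 = Lk k.+1 * alpha k.+1 ^+ 2 /\
         (forall a : R, A k + a = Lk k.+1 * a ^+ 2 -> a <= alpha k.+1)),
       (A k.+1 = A k + alpha k.+1 /\
        y k.+1 = (A k.+1)^-1 *: (alpha k.+1 *: u k + A k *: x k)),
       Q (u k.+1) /\
         (forall z, Q z ->
           bregman d gd (u k.+1) (u k) + alpha k.+1 * (linmax fs gs (y k.+1) (u k.+1) + h (u k.+1))
           <= bregman d gd z (u k) + alpha k.+1 * (linmax fs gs (y k.+1) z + h z)),
       x k.+1 = (A k.+1)^-1 *: (alpha k.+1 *: u k.+1 + A k *: x k) &
       fobj fs h (x k.+1) <= linmax fs gs (y k.+1) (x k.+1)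
          + Lk k.+1 / 2 * nrm (x k.+1 - y k.+1) ^+ 2 + h (x k.+1)].

End Defs.

(* Main.v *)
Require Import Defs.
From HB Require Import structures.
From mathcomp Require Import all_boot all_order all_algebra.
From mathcomp Require Import all_classical all_reals all_analysis.
From mathcomp Require Import ring lra.
Set Implicit Arguments. Unset Strict Implicit.
Import Order.TTheory GRing.Theory Num.Theory.
Import numFieldNormedType.Exports.
Local Open Scope classical_set_scope.
Local Open Scope ring_scope.

Section H.
Variables (R : realType) (n : nat).
Notation vec := 'rV[R]_n.

Lemma convQ (Q : set vec) (hQ : convex_set Q) a b (t : R) :
  Q a -> Q b -> 0 <= t <= 1 -> Q (t *: a + (1 - t) *: b).
Proof.
move=> Qa Qb /andP[t0 t1].
have := hQ a b (Itv01 t0 t1).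
rewrite !inE => /(_ Qa Qb). done.
Qed.

Lemma dotD (l a b : vec) : dot l (a + b) = dot l a + dot l b.
Proof. by rewrite /dot -big_split /=; apply: eq_bigr => i _; rewrite mxE mulrDr. Qed.

Lemma dotZ (l : vec) c (a : vec) : dot l (c *: a) = c * dot l a.
Proof. by rewrite /dot mulr_sumr; apply: eq_bigr => i _; rewrite mxE mulrCA. Qed.

Lemma dotN (l a : vec) : dot l (- a) = - dot l a.
Proof. by rewrite -scaleN1r dotZ mulN1r. Qed.

Lemma dotB (l a b : vec) : dot l (a - b) = dot l a - dot l b.
Proof. by rewrite dotD dotN. Qed.

Lemma dotDl (l1 l2 a : vec) : dot (l1 + l2) a = dot l1 a + dot l2 a.
Proof. by rewrite /dot -big_split /=; apply: eq_bigr => i _; rewrite mxE mulrDl. Qed.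

Lemma dotNl (l a : vec) : dot (- l) a = - dot l a.
Proof. by rewrite /dot -sumrN; apply: eq_bigr => i _; rewrite mxE mulNr. Qed.

Lemma bmax_le m (F : 'I_m.+1 -> R) c : (forall i, F i <= c) -> bmax F <= c.
Proof.
move=> H; rewrite /bmax; elim/big_ind: _ => //.
by move=> a b ha hb; rewrite ge_max ha hb.
Qed.

Lemma le_bmax m (F : 'I_m.+1 -> R) i : F i <= bmax F.
Proof.
rewrite /bmax (bigD1 i) //= le_max lexx //.
Qed.

Lemma dir_cvg (g : vec -> R) (gr : vec -> vec) (p v : vec) :
  differentiable g p -> 'd g p v = dot (gr p) v ->
  (fun t => t^-1 * (g (p + t *: v) - g p)) @ 0^'+ --> dot (gr p) v.
Proof.
move=> dg e.
have H : (fun h : R => h^-1 *: ((g \o shift p) (h *: v) - g p)) @ 0^' --> 'D_v g p.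
  exact: (@diff_derivable _ _ _ _ _ v dg).
rewrite (deriveE _ dg) e in H.
apply: cvg_dnbhs_at_right.
have E : (fun t => t^-1 * (g (p + t *: v) - g p)) =
  (fun h : R => h^-1 *: ((g \o shift p) (h *: v) - g p)).
  by apply: boolp.funext => t /=; rewrite [p + _]addrC.
rewrite E; exact: H.
Qed.

Lemma lim_lb (F : R -> R) l c K :
  F @ 0^'+ --> l -> (forall t, 0 < t <= 1 -> c - K * t <= F t) -> c <= l.
Proof.
move=> HF Hb.
have HG : (fun t => F t + K * t) @ 0^'+ --> l + K * 0.
  apply: cvgD => //; apply: cvgMr; apply: cvg_at_right_filter; exact: cvg_id.
rewrite mulr0 addr0 in HG.
apply: (cvgr_to_ge HG); near=> t.
have := Hb t; rewrite lerBlDr; apply; apply/andP; split.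
  by near: t; exact: nbhs_right_gt.
by near: t; apply: nbhs_right_le; exact: ltr01.
Unshelve. all: by end_near.
Qed.

Lemma lim_ub (F : R -> R) l c K :
  F @ 0^'+ --> l -> (forall t, 0 < t <= 1 -> F t <= c + K * t) -> l <= c.
Proof.
move=> HF Hb.
have HG : (fun t => F t - K * t) @ 0^'+ --> l - K * 0.
  apply: cvgB => //; apply: cvgMr; apply: cvg_at_right_filter; exact: cvg_id.
rewrite mulr0 subr0 in HG.
apply: (cvgr_to_le HG); near=> t.
have := Hb t; rewrite -lerBlDr; apply; apply/andP; split.
  by near: t; exact: nbhs_right_gt.
by near: t; apply: nbhs_right_le; exact: ltr01.
Unshelve. all: by end_near.
Qed.

Lemma seg_eq (p q : vec) (t : R) : p + t *: (q - p) = t *: q + (1 - t) *: p.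
Proof. by rewrite scalerBr scalerBl scale1r addrCA. Qed.

Lemma grad_ineq (Q : set vec) g gr p q :
  convex_on Q g -> gradient_on Q g gr -> Q p -> Q q ->
  g p + dot (gr p) (q - p) <= g q.
Proof.
move=> cg gg Qp Qq.
have [dg e] := gg p Qp.
have := @lim_ub _ _ (g q - g p) (0) (dir_cvg dg (e (q - p)) ).
have H : (forall t, 0 < t <= 1 ->
   t^-1 * (g (p + t *: (q - p)) - g p) <= g q - g p + 0 * t).
  move=> t /andP[t0 t1]; rewrite mul0r addr0 ler_pdivrMl // seg_eq.
  have := cg q p t Qq Qp; rewrite (ltW t0) t1 => /(_ isT). lra.
move=> /(_ H); lra.
Qed.

Lemma sc_ineq nrm (Q : set vec) d gd a b :
  strongly_convex1_on nrm Q d -> gradient_on Q d gd -> Q a -> Q b ->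
  1 / 2 * nrm (a - b) ^+ 2 <= bregman d gd a b.
Proof.
move=> sc gg Qa Qb.
have [dg e] := gg b Qb.
set N := nrm (a - b) ^+ 2.
have := @lim_ub _ _ (d a - d b - N / 2) (N / 2) (dir_cvg dg (e (a - b)) ).
have H : (forall t, 0 < t <= 1 ->
   t^-1 * (d (b + t *: (a - b)) - d b) <= d a - d b - N / 2 + N / 2 * t).
  move=> t /andP[t0 t1]; rewrite ler_pdivrMl // seg_eq.
  have := sc a b t Qa Qb; rewrite (ltW t0) t1 => /(_ isT).
  rewrite -/N. nra.
move=> /(_ H); rewrite /bregman; lra.
Qed.

Lemma opt_ineq (Q : set vec) (hQ : convex_set Q) d gd (phi : vec -> R) (al : R) u1 uk z :
  gradient_on Q d gd -> convex_on Q phi -> 0 <= al -> Q u1 -> Q z ->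
  (forall w, Q w -> bregman d gd u1 uk + al * phi u1 <= bregman d gd w uk + al * phi w) ->
  al * phi u1 + bregman d gd z u1 + bregman d gd u1 uk <= al * phi z + bregman d gd z uk.
Proof.
move=> gg cphi al0 Q1 Qz hmin.
have [dg e] := gg u1 Q1.
set c := dot (gd uk) (z - u1) + al * (phi u1 - phi z).
have := @lim_lb _ _ c 0 (dir_cvg dg (e (z - u1)) ).
have H : (forall t, 0 < t <= 1 ->
   c - 0 * t <= t^-1 * (d (u1 + t *: (z - u1)) - d u1)).
  move=> t /andP[t0 t1]; rewrite mul0r subr0 ler_pdivlMl //.
  have Qw : Q (u1 + t *: (z - u1)) by rewrite seg_eq; apply: convQ => //; rewrite (ltW t0) t1.
  have := hmin _ Qw.
  have := cphi z u1 t Qz Q1; rewrite (ltW t0) t1 => /(_ isT).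
  rewrite -seg_eq /bregman /c.
  have -> : u1 + t *: (z - u1) - uk = (u1 - uk) + t *: (z - u1).
    by rewrite addrAC.
  rewrite [dot _ (u1 - uk + _)]dotD dotZ => h1 h2.
  have h3 := ler_wpM2l al0 h1.
  nra.
move=> /(_ H) h.
have E : bregman d gd z uk - bregman d gd z u1 - bregman d gd u1 uk
   = dot (gd u1 - gd uk) (z - u1).
  rewrite /bregman !dotB !dotDl !dotNl. ring.
move: E h; rewrite dotDl dotNl /c. lra.
Qed.

Lemma linmax_convex m (fs : 'I_m.+1 -> vec -> R) gs (y : vec) (Q : set vec) h :
  convex_on Q h -> convex_on Q (fun w => linmax fs gs y w + h w).
Proof.
move=> ch a b t Qa Qb tt.
have := ch a b t Qa Qb tt.
case/andP: tt => t0 t1.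
suff : linmax fs gs y (t *: a + (1 - t) *: b) <=
   t * linmax fs gs y a + (1 - t) * linmax fs gs y b by lra.
apply: bmax_le => i.
have ha := le_bmax (fun j => fs j y + dot (gs j y) (a - y)) i.
have hb := le_bmax (fun j => fs j y + dot (gs j y) (b - y)) i.
rewrite /= in ha hb.
have ha' := ler_wpM2l t0 ha.
have t1' : 0 <= 1 - t by lra.
have hb' := ler_wpM2l t1' hb.
rewrite /linmax.
move: ha' hb'; rewrite !dotB !dotD !dotZ. nra.
Qed.

Lemma linmax_le m (fs : 'I_m.+1 -> vec -> R) gs (Q : set vec) (y q : vec) :
  (forall i, convex_on Q (fs i)) -> (forall i, gradient_on Q (fs i) (gs i)) ->
  Q y -> Q q -> linmax fs gs y q <= bmax (fun i => fs i q).
Proof.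
move=> cf gf Qy Qq; apply: bmax_le => i.
exact: le_trans (grad_ineq (cf i) (gf i) Qy Qq) (le_bmax (fun i => fs i q) i).
Qed.

Lemma combo (A1 A al : R) (a b : vec) : A1 = A + al -> 0 < A1 ->
  A1^-1 *: (al *: a + A *: b) = (al / A1) *: a + (1 - al / A1) *: b.
Proof.
move=> e p.
have -> : 1 - al / A1 = A1^-1 * A.
  rewrite e; rewrite e in p; field; lra.
by rewrite scalerDr !scalerA mulrC.
Qed.

End H.

Lemma alpha_pos (R : realType) (A L al : R) : 0 <= A -> 0 < L ->
  A + al = L * al ^+ 2 -> (forall a, A + a = L * a ^+ 2 -> a <= al) -> 0 < al.
Proof.
move=> A0 L0 e hm.
have h : L^-1 - al <= al.
  apply: hm.
  have -> : L * (L^-1 - al) ^+ 2 = L^-1 - 2 * al + L * al ^+ 2.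
    field; lra.
  lra.
have : 0 < L^-1 by rewrite invr_gt0.
lra.
Qed.

Unset Implicit Arguments. Set Strict Implicit.

Theorem lemma3 (R : realType) (n m : nat) (nrm : 'rV[R]_n -> R) (Q : set 'rV[R]_n)
  (fs : 'I_m.+1 -> 'rV[R]_n -> R) (gs : 'I_m.+1 -> 'rV[R]_n -> 'rV[R]_n)
  (h : 'rV[R]_n -> R) (d : 'rV[R]_n -> R) (gd : 'rV[R]_n -> 'rV[R]_n)
  (L L0 : R) (x0 : 'rV[R]_n) (N : nat)
  (Lk alpha A : nat -> R) (x u y : nat -> 'rV[R]_n) :
  is_norm nrm ->
  closed Q -> convex_set Q ->
  (forall i, convex_on Q (fs i)) ->
  (forall i, gradient_on Q (fs i) (gs i)) ->
  (forall i a b, Q a -> Q b ->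
     dual_norm nrm (gs i a - gs i b) <= L * nrm (a - b)) ->
  convex_on Q h ->
  gradient_on Q d gd -> {within Q, continuous gd} ->
  strongly_convex1_on nrm Q d ->
  Q x0 -> 0 < L0 -> L0 <= L ->
  amt_run nrm Q fs gs h d gd x0 L0 N Lk alpha A x u y ->
  forall k : nat, (k < N)%N ->
  forall z, Q z ->
    A k.+1 * fobj fs h (x k.+1) - A k * fobj fs h (x k)
      + bregman d gd z (u k.+1) - bregman d gd z (u k)
    <= alpha k.+1 * fobj fs h z.
Proof.
move=> nn _ cQ cf gf _ ch gdd _ sc Qx0 L0p _ [[eL0 [ea0 [eA0 [ex0 [eu0 ey0]]]]] run].
have stepP : forall k, (k < N)%N -> 0 <= A k -> 0 < Lk k ->
    [/\ 0 < Lk k.+1, 0 < alpha k.+1 & 0 < A k.+1].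
  move=> k kN A0 Lp.
  have [[[i ei] [er em]] [eA _] _ _ _] := run k kN.
  have Lp' : 0 < Lk k.+1.
    by rewrite ei; apply: mulr_gt0; [apply: divr_gt0 | apply: exprn_gt0].
  have ap := alpha_pos A0 Lp' er em.
  split => //; rewrite eA; lra.
have inv : forall j, (j <= N)%N -> [/\ Q (x j), Q (u j), 0 <= A j & 0 < Lk j].
  elim => [|j IH] jN.
    by rewrite ex0 eu0 eA0 eL0; split.
  have jN' : (j < N)%N by [].
  have [Qxj Quj Aj Lj] := IH (ltnW jN').
  have [Lp ap Ap] := stepP j jN' Aj Lj.
  have [_ [eA _] [Qu1 _] ex1 _] := run j jN'.
  split => //; last by lra.
  rewrite ex1 (combo _ _ eA Ap); apply: convQ => //.
  apply/andP; split.
    by apply: divr_ge0; lra.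
  by rewrite ler_pdivrMr // mul1r; lra.
move=> k kN z Qz.
have [Qxk Quk Ak Lkp] := inv k (ltnW kN).
have [Lp ap Ap] := stepP k kN Ak Lkp.
have [[_ [er _]] [eA ey] [Qu1 hmin] ex1 acc] := run k kN.
set A1 := A k.+1 in Ap eA ey ex1 er *.
set al := alpha k.+1 in ap er eA ey ex1 hmin *.
have t01 : 0 <= al / A1 <= 1.
  apply/andP; split.
    by apply: divr_ge0; lra.
  by rewrite ler_pdivrMr // mul1r; lra.
have Qy1 : Q (y k.+1) by rewrite ey (combo _ _ eA Ap); apply: convQ.
pose phi w := linmax fs gs (y k.+1) w + h w.
have cphi : convex_on Q phi by apply: linmax_convex.
have hc : phi (x k.+1) <= al / A1 * phi (u k.+1) + (1 - al / A1) * phi (x k).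
  by rewrite ex1 (combo _ _ eA Ap); apply: cphi.
have hxk : phi (x k) <= fobj fs h (x k).
  by rewrite /phi /fobj lerD2r; apply: linmax_le Qy1 Qxk.
have hz : phi z <= fobj fs h z.
  by rewrite /phi /fobj lerD2r; apply: linmax_le Qy1 Qz.
have ho := opt_ineq cQ gdd cphi (ltW ap) Qu1 Qz hmin.
have hs := sc_ineq sc gdd Qu1 Quk.
have ediff : x k.+1 - y k.+1 = (al / A1) *: (u k.+1 - u k).
  rewrite ex1 ey -scalerBr opprD addrACA subrr addr0 -scalerBr scalerA.
  by rewrite mulrC.
case: nn => _ _ nZ _.
rewrite ediff nZ ger0_norm in acc; last by apply: divr_ge0; lra.
set Nn := nrm (u k.+1 - u k) in acc hs.
have eq1 : A1 * (Lk k.+1 / 2 * (al / A1 * Nn) ^+ 2) = 1 / 2 * Nn ^+ 2.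
  have -> : A1 * (Lk k.+1 / 2 * (al / A1 * Nn) ^+ 2) =
      (Lk k.+1 * al ^+ 2) / A1 * (1 / 2 * Nn ^+ 2).
    field; lra.
  rewrite -er -eA mulfV ?mul1r //; lra.
have acc' : A1 * fobj fs h (x k.+1) <= A1 * phi (x k.+1) + 1 / 2 * Nn ^+ 2.
  rewrite -eq1 -mulrDr; apply: ler_wpM2l; first lra.
  rewrite /phi; lra.
have hc' := ler_wpM2l (ltW Ap) hc.
have e2 : A1 * (al / A1 * phi (u k.+1) + (1 - al / A1) * phi (x k))
   = al * phi (u k.+1) + A k * phi (x k).
  rewrite eA; field; rewrite -eA; lra.
rewrite e2 in hc'.
have h3 := ler_wpM2l Ak hxk.
have h4 := ler_wpM2l (ltW ap) hz.
lra.
Qed.
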